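(* Let $P$ be a span program on $n$ variables over $\mathbb{C}$ with target vector $t=(1,0,\dots,0)\in\mathbb{C}^m$, grouped input vectors $v_j\in\mathbb{C}^m$ for $j\in J$, and literal sets $X_j$. Let $G_P$ be its associated weighted bipartite graph. Fix an input $x\in\{0,1\}^n$. Define $G_P(x)$ by deleting from $G_P$ every input edge $(a_j,b_i)$ such that the literal of $X_j$ indexed by $i\in I_j$ evaluates to true on $x$. Let $H$ be the Hermitian weighted adjacency matrix of $G_P(x)$. Consider the system of linear equations $\sum_u H_{v,u}\psi(u)=0$ for every vertex $v$ of $G_P(x)$ except $v=a_O$, in the unknown vector $\psi\in\mathbb{C}^{V(G_P)}$. Then: (i) this system has a solution with $\psi(a_O)\neq 0$ if and only if $f_P(x)=1$; (ii) this system has a solution with $\psi(b_O)\neq 0$ if and only if $f_P(x)=0$.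
   Context: A span program $P$ over $\mathbb{C}$ on $n$ Boolean variables consists of a nonzero target vector $t\in\mathbb{C}^m$ and vectors $v_j\in\mathbb{C}^m$ indexed by a finite set $J$. Each $v_j$ is labeled by a subset $X_j$ of the literals $\{x_1,\overline{x_1},\dots,x_n,\overline{x_n}\}$. The function $f_P:\{0,1\}^n\to\{0,1\}$ is defined by $f_P(x)=1$ iff there are coefficients $a_j\in\mathbb{C}$ with $\sum_j a_jv_j=t$ and $a_j=0$ whenever some literal in $X_j$ is false on $x$. For each $j$, let $I_j$ be an index set in bijection with $X_j$, and let $I=\bigsqcup_j I_j$ be their disjoint union. Let $C=\{2,\dots,m\}$ index the coordinates other than the first. The graph $G_P$ has vertex set $\{a_O,b_O\}\cup\{a_j:j\in J\}\cup\{b_c:c\in C\}\cup\{b_i:i\in I\}$. Its weighted edges are: - the output edge $(a_O,b_O)$ with weight $1$; - edges $(b_O,a_j)$ with weight $(v_j)_1$; - edges $(b_c,a_j)$ with weight $(v_j)_c$; - input edges $(a_j,b_i)$ for $i\in I_j$ with weight $1$. The Hermitian weighted adjacency matrix $H$ has $H_{b,a}=w$ and $H_{a,b}=\overline{w}$ for each edge between a $b$-vertex $b$ and an $a$-vertex $a$ of weight $w$. All other entries are $0$. *)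

(* Defs.v *)
From HB Require Import structures.
From mathcomp Require Import all_boot all_algebra.
From mathcomp Require Import reals complex.
Set Implicit Arguments. Unset Strict Implicit. Unset Printing Implicit Defensive.
Import GRing.Theory Num.Theory.
Local Open Scope ring_scope.

(* Literals on n Boolean variables: (k, true) is x_k, (k, false) is ~x_k. *)
Definition lit (n : nat) : finType := ('I_n * bool)%type.

Definition lit_true (n : nat) (x : 'I_n -> bool) (l : lit n) : bool :=
  x l.1 == l.2.

Section SpanProgram.
Variables (C : numClosedFieldType) (n m : nat) (J : finType).
(* Span program on n variables in C^(m.+1) (coordinates 0..m; coordinate 0 is
   the paper's "first" coordinate), input vectors v j, literal sets X j. *)
Variables (v : J -> 'cV[C]_m.+1) (X : J -> {set lit n}).

Definition target : 'cV[C]_m.+1 := \col_i (i == ord0)%:R.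

Definition fP (x : 'I_n -> bool) : Prop :=
  exists a : J -> C,
    \sum_j a j *: v j = target /\
    forall j, [exists l in X j, ~~ lit_true x l] -> a j = 0.

(* I_j is (in bijection with) X_j; I is their disjoint union. *)
Definition Iset : finType := {j : J & {l : lit n | l \in X j}}.

(* Vertices of G_P.  Vb c, c : 'I_m, is b_c for the coordinate lift ord0 c
   (i.e. the coordinates other than the first). *)
Inductive vertex :=
| VaO | VbO | Va of J | Vb of 'I_m | Vi of Iset.

Definition vertex_enc (u : vertex) :
    (bool + J + 'I_m + Iset)%type :=
  match u with
  | VaO => inl (inl (inl true))
  | VbO => inl (inl (inl false))
  | Va j => inl (inl (inr j))
  | Vb c => inl (inr c)
  | Vi i => inr i
  end.

Definition vertex_dec (s : (bool + J + 'I_m + Iset)%type) : vertex :=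
  match s with
  | inl (inl (inl true)) => VaO
  | inl (inl (inl false)) => VbO
  | inl (inl (inr j)) => Va j
  | inl (inr c) => Vb c
  | inr i => Vi i
  end.

Lemma vertex_encK : cancel vertex_enc vertex_dec.
Proof. by case. Qed.

HB.instance Definition _ := Finite.copy vertex (can_type vertex_encK).

Definition Hx (x : 'I_n -> bool) (u w : vertex) : C :=
  match u, w with
  | VbO, VaO => 1
  | VaO, VbO => 1^*
  | VbO, Va j => v j ord0 ord0
  | Va j, VbO => (v j ord0 ord0)^*
  | Vb c, Va j => v j (lift ord0 c) ord0
  | Va j, Vb c => (v j (lift ord0 c) ord0)^*
  | Vi i, Va j => if (tag i == j) && ~~ lit_true x (val (tagged i)) then 1 else 0
  | Va j, Vi i => if (tag i == j) && ~~ lit_true x (val (tagged i)) then 1^* else 0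
  | _, _ => 0
  end.

Definition solves (x : 'I_n -> bool) (psi : vertex -> C) : Prop :=
  forall w : vertex, w != VaO -> \sum_(u : vertex) Hx x w u * psi u = 0.

End SpanProgram.

(* Main.v *)
Require Import Defs.
From HB Require Import structures.
From mathcomp Require Import all_boot all_algebra.
From mathcomp Require Import reals complex.
Import GRing.Theory Num.Theory.
Local Open Scope ring_scope.

Lemma sum_vertex (C : nzRingType) n m (J : finType) (X : J -> {set lit n})
  (F : vertex m X -> C) :
  \sum_(u : vertex m X) F u = F (VaO m X) + F (VbO m X) + \sum_j F (Va m X j)
     + \sum_c F (Vb X c) + \sum_i F (Vi m i).
Proof.
rewrite (reindex (@vertex_dec n m J X)) /=; last first.
  exists (@vertex_enc n m J X) => [s _|u _].
    by case: s => [[[[]|]|]|].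
  by case: u.
rewrite big_sumType /= big_sumType /= big_sumType /= big_bool /=.
done.
Qed.

Lemma conj_sum (C:numClosedFieldType) (I : finType) (F: I -> C) : (\sum_i F i)^* = \sum_i (F i)^*.
Proof. by rewrite rmorph_sum. Qed.
Lemma conj_mul (C:numClosedFieldType) (a b : C) : (a * b)^* = a^* * b^*.
Proof. by rewrite rmorphM. Qed.

Section S.
Variables (R : realType) (n m : nat) (J : finType)
    (v : J -> 'cV[R[i]]_m.+1) (X : J -> {set lit n}) (x : 'I_n -> bool).
Local Notation V := (vertex m X).
Local Notation H := (Hx v x).

Lemma sum0l (I : finType) (F : I -> R[i]) : \sum_i 0 * F i = 0.
Proof. by rewrite big1 // => i _; rewrite mul0r. Qed.
Lemma sum0r (I : finType) (F : I -> R[i]) : \sum_i F i * 0 = 0.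
Proof. by rewrite big1 // => i _; rewrite mulr0. Qed.
Ltac z := rewrite ?sum0l ?sum0r ?mul0r ?mulr0 ?add0r ?addr0.

Lemma eqVbO (psi : V -> R[i]) : \sum_u H (VbO m X) u * psi u =
   psi (VaO m X) + \sum_j v j ord0 ord0 * psi (Va m X j).
Proof. rewrite sum_vertex /=. z. by rewrite mul1r. Qed.

Lemma eqVb c (psi : V -> R[i]) : \sum_u H (Vb X c) u * psi u =
   \sum_j v j (lift ord0 c) ord0 * psi (Va m X j).
Proof. rewrite sum_vertex /=. z. done. Qed.

Lemma eqVi i (psi : V -> R[i]) : \sum_u H (Vi m i) u * psi u =
   if ~~ lit_true x (val (tagged i)) then psi (Va m X (tag i)) else 0.
Proof.
rewrite sum_vertex /=. z. rewrite (bigD1 (tag i)) //= eqxx /=.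
rewrite big1 ?addr0; last by move=> j /negbTE; rewrite eq_sym => ->; rewrite mul0r.
by case: ifP => _; rewrite ?mul1r ?mul0r.
Qed.

Lemma eqVa j (psi : V -> R[i]) : \sum_u H (Va m X j) u * psi u =
   (v j ord0 ord0)^* * psi (VbO m X) + \sum_c (v j (lift ord0 c) ord0)^* * psi (Vb X c)
   + \sum_i (if (tag i == j) && ~~ lit_true x (val (tagged i)) then 1 else 0) * psi (Vi m i).
Proof.
rewrite sum_vertex /=. z. apply: congr2 => //. apply: eq_bigr => i _.
by rewrite conjC1.
Qed.

Lemma part1a (psi : V -> R[i]) : solves (X:=X) v x psi -> psi (VaO m X) != 0 -> fP v X x.
Proof.
move=> hs hA.
exists (fun j => - psi (Va m X j) / psi (VaO m X)); split.
  apply/matrixP => r k; rewrite ord1 summxE !mxE.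
  under eq_bigr do rewrite mxE.
  have key : \sum_j - psi (Va m X j) / psi (VaO m X) * v j r ord0
      = - (\sum_j v j r ord0 * psi (Va m X j)) / psi (VaO m X).
    rewrite mulNr mulr_suml -sumrN; apply: eq_bigr => j _.
    by rewrite !mulNr mulrAC [psi _ * _]mulrC.
  rewrite key; case: (unliftP ord0 r) => [c ->|->].
    have := hs (Vb X c) isT; rewrite eqVb => ->.
    by rewrite eq_sym (negbTE (neq_lift _ _)) oppr0 mul0r.
  have := hs (VbO m X) isT; rewrite eqVbO => /eqP.
  rewrite addrC addr_eq0 => /eqP ->.
  by rewrite opprK divff // eqxx.
move=> j /existsP [l /andP [hl hf]].
have := hs (Vi m (existT (fun j => {l : lit n | l \in X j}) j (exist _ l hl) : Iset X)) isT.
rewrite eqVi /= hf => ->.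
by rewrite oppr0 mul0r.
Qed.

Lemma ent (a : J -> R[i]) r : \sum_j a j *: v j = @target _ m -> \sum_j a j * v j r ord0 = (r == ord0)%:R.
Proof.
move/matrixP => /(_ r ord0); rewrite summxE mxE => <-.
by apply: eq_bigr => j _; rewrite mxE.
Qed.

Lemma part1b : fP v X x -> exists psi : V -> R[i], solves (X:=X) v x psi /\ psi (VaO m X) != 0.
Proof.
case=> a [ha hz].
exists (fun u => match u with VaO => 1 | Va j => - a j | _ => 0 end); split; last by rewrite oner_neq0.
case=> [//|_|j _|c _|i _].
- rewrite eqVbO.
  rewrite (eq_bigr (fun j => - (a j * v j ord0 ord0))); last by move=> j _; rewrite mulrN mulrC.
  by rewrite sumrN (ent _ _ ha) eqxx subrr.
- rewrite eqVa /=; z; done.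
- rewrite eqVb.
  rewrite (eq_bigr (fun j => - (a j * v j (lift ord0 c) ord0))); last by move=> j _; rewrite mulrN mulrC.
  by rewrite sumrN (ent _ _ ha) eq_sym (negbTE (neq_lift _ _)) oppr0.
- rewrite eqVi; case: ifP => // hf.
  rewrite hz ?oppr0 //; apply/existsP; exists (val (tagged i)).
  by rewrite (valP (tagged i)) hf.
Qed.

Lemma part2b (psi : V -> R[i]) : solves (X:=X) v x psi -> psi (VbO m X) != 0 -> ~ fP v X x.
Proof.
move=> hs hB [a [ha hz]].
have E j : (a j)^* * ((v j ord0 ord0)^* * psi (VbO m X) +
     \sum_c (v j (lift ord0 c) ord0)^* * psi (Vb X c)) = 0.
  have := hs (Va m X j) isT; rewrite eqVa.
  have [->|nz] := eqVneq (a j) 0; first by rewrite conjC0 mul0r.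
  rewrite (_ : \sum_(i : Iset X) _ = 0) ?addr0 => [->|]; first by rewrite mulr0.
  apply: big1 => i _; case: ifP; last by rewrite mul0r.
  move/andP => [/eqP ti hf]; exfalso; move/eqP: nz; apply.
  move: ti hf; case: i => j' [l hl] /= ti hf; subst j'.
  by apply: hz; apply/existsP; exists l; rewrite hl hf.
have S : \sum_j (a j)^* * ((v j ord0 ord0)^* * psi (VbO m X) +
     \sum_c (v j (lift ord0 c) ord0)^* * psi (Vb X c)) = psi (VbO m X).
  rewrite (eq_bigr (fun j => (a j * v j ord0 ord0)^* * psi (VbO m X) +
     \sum_c (a j * v j (lift ord0 c) ord0)^* * psi (Vb X c))); last first.
    move=> j _; rewrite mulrDr mulr_sumr conj_mul mulrA; congr (_ + _).
    by apply: eq_bigr => c _; rewrite conj_mul mulrA.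
  rewrite big_split /= -mulr_suml -conj_sum (ent _ _ ha) eqxx conjC1 mul1r exchange_big /=.
  rewrite big1 ?addr0 // => c _.
  by rewrite -mulr_suml -conj_sum (ent _ _ ha) eq_sym (negbTE (neq_lift _ _)) conjC0 mul0r.
move: hB; rewrite -S big1 ?eqxx // => j _; exact: E.
Qed.

Definition avail j := [forall l in X j, lit_true x l].

Lemma part2a : ~ fP v X x -> exists psi : V -> R[i], solves (X:=X) v x psi /\ psi (VbO m X) != 0.
Proof.
move=> hnf.
pose B : 'M[R[i]]_(#|J|, m.+1) :=
  \matrix_(r, k) (if avail (enum_val r) then v (enum_val r) k ord0 else 0).
have nsub : ~~ ((@target _ m)^T <= B)%MS.
  apply/negP => /submxP [D hD]; apply: hnf.
  exists (fun j => if avail j then D ord0 (enum_rank j) else 0); split.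
    apply/matrixP => r k; rewrite (ord1 k) summxE.
    under eq_bigr do rewrite mxE.
    rewrite mxE.
    move/matrixP: hD => /(_ ord0 r); rewrite !mxE => ->.
    rewrite (reindex (@enum_rank J)) /=; last first.
      by exists enum_val => j _; [rewrite enum_rankK | rewrite enum_valK].
    apply: eq_bigr => j _; rewrite mxE enum_rankK.
    by case: (avail j); rewrite ?mul0r ?mulr0 // mulrC.
  move=> j /existsP [l /andP [hl hf]]; case: ifP => // /forall_inP /(_ l hl).
  by rewrite (negbTE hf).
pose Ck := cokermx B.
have [k hk] : exists k, ((@target _ m)^T *m Ck) ord0 k != 0.
  case: (pickP (fun k => ((@target _ m)^T *m Ck) ord0 k != 0)) => [k hk|h]; first by exists k.
  case/negP: nsub; rewrite submxE; apply/eqP/matrixP => i q; rewrite (ord1 i) [RHS]mxE.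
  by apply/eqP/negbFE; exact: h.
have hu0 : Ck ord0 k != 0.
  move: hk; rewrite mxE big_ord_recl [X in _ + X]big1 ?addr0 => [|q _].
    by rewrite !mxE eqxx mul1r.
  by rewrite !mxE eq_sym (negbTE (neq_lift _ _)) mul0r.
have orth j : avail j -> \sum_q v j q ord0 * Ck q k = 0.
  move=> hj; have := mulmx_coker B; move/matrixP => /(_ (enum_rank j) k).
  rewrite !mxE => E; rewrite -[RHS]E; apply: eq_bigr => q _; by rewrite [B _ _]mxE enum_rankK hj.
pose w q := (Ck q k)^*.
pose S j := \sum_q (v j q ord0)^* * w q.
have S0 j : avail j -> S j = 0.
  move=> hj; transitivity ((\sum_q v j q ord0 * Ck q k)^*); last by rewrite orth // conjC0.
  rewrite conj_sum; apply: eq_bigr => q _.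
  by rewrite conj_mul.
pose p j := [pick i : Iset X | (tag i == j) && ~~ lit_true x (val (tagged i))].
exists (fun u => match u with VbO => w ord0 | Vb c => w (lift ord0 c)
  | Vi i => if p (tag i) == Some i then - S (tag i) else 0 | _ => 0 end); split; last first.
  by rewrite /w conjC_eq0.
case=> [//|_|j _|c _|i _].
- by rewrite eqVbO; z.
- rewrite eqVa /=.
  have -> : (v j ord0 ord0)^* * w ord0 + \sum_c (v j (lift ord0 c) ord0)^* * w (lift ord0 c) = S j.
    by rewrite /S big_ord_recl.
  case hav: (avail j).
    rewrite S0 // add0r big1 // => i _; case: ifP; last by rewrite mul0r.
    move/andP => [/eqP ti hf]; exfalso; move: ti hf; case: i => j' [l hl] /= ti hf; subst j'.
    by move/forall_inP: hav => /(_ l hl); rewrite (negbTE hf).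
  case hp: (p j) => [i0|]; last first.
    move: hp; rewrite /p; case: pickP => // hnone _.
    exfalso; move/negbT: hav; rewrite negb_forall_in => /existsP [l /andP [hl hf]].
    by move: (hnone (existT (fun j => {l : lit n | l \in X j}) j (exist _ l hl) : Iset X)); rewrite /= eqxx hf.
  have hi0 : (tag i0 == j) && ~~ lit_true x (val (tagged i0)).
    by move: hp; rewrite /p; case: pickP => // i1 hi1 [<-].
  rewrite (bigD1 i0) //= hi0 mul1r.
  move/andP: hi0 => [/eqP ti0 _]; rewrite ti0 hp eqxx.
  rewrite big1 ?addr0 ?addrN // => i hi; case: ifP; last by rewrite mul0r.
  move/andP => [/eqP ti _]; rewrite ti hp /=.
  by case: eqP => [[e]|_]; [by rewrite e eqxx in hi | rewrite mulr0].
- by rewrite eqVb; z.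
- by rewrite eqVi; case: ifP.
Qed.
End S.

Theorem theorem2p5 (R : realType) (n m : nat) (J : finType)
    (v : J -> 'cV[R[i]]_m.+1) (X : J -> {set lit n}) (x : 'I_n -> bool) :
  ((exists psi : vertex m X -> R[i],
       solves (X:=X) v x psi /\ psi (VaO m X) != 0) <-> fP v X x) /\
  ((exists psi : vertex m X -> R[i],
       solves (X:=X) v x psi /\ psi (VbO m X) != 0) <-> ~ fP v X x).
Proof.
split; split.
- by case=> psi [hs hA]; exact: (@part1a R n m J v X x psi hs hA).
- exact: (@part1b R n m J v X x).
- by case=> psi [hs hB]; exact: (@part2b R n m J v X x psi hs hB).
- exact: (@part2a R n m J v X x).
Qed.
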